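(* Let $H\in(1/2,1)$, $\alpha\in(1-H,1)$, $T>0$, $N\ge2$, $h=T/N$, $t_n=nh$. Then there is a constant $C$ (independent of $N$) such that for all $1\le k<l\le N$, all $0<u\le t_{k-1}<s\le t_k$ and all $\tau\in(t_{l-1},t_l]$, $$\int_{t_{k-1}}^{t_{l-1}}\big((t_{l-1}-v)^{\alpha-1}-(\tau-v)^{\alpha-1}\big)|v-u|^{2H-2}\,\mathrm dv\le Ch^\alpha(\tau-s)^{2H-2}.$$ *)

(* Defs.v *)
From HB Require Import structures.
From mathcomp Require Import all_boot all_order all_algebra.
From mathcomp Require Import all_classical all_reals all_analysis.
Set Implicit Arguments. Unset Strict Implicit. Unset Printing Implicit Defensive.
Import Order.TTheory GRing.Theory Num.Theory.
Local Open Scope ring_scope.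

Definition step {R : realType} (T : R) (N : nat) : R := T / N%:R.
Definition grid {R : realType} (T : R) (N n : nat) : R := n%:R * step T N.

(* Main.v *)
Require Import Defs.
From HB Require Import structures.
From mathcomp Require Import all_boot all_order all_algebra.
From mathcomp Require Import all_classical all_reals all_analysis.
From mathcomp Require Import measurable_realfun.
From mathcomp Require Import ring lra zify.
Import Order.TTheory GRing.Theory Num.Theory.
Local Open Scope classical_set_scope.
Local Open Scope ring_scope.

Module Aux.
Import numFieldNormedType.Exports.
Lemma powR_anti {R : realType} (r x y : R) : r <= 0 -> 0 < x -> x <= y -> y `^ r <= x `^ r.
Proof.
move=> r0 x0 xy.
have y0 : 0 < y by apply: lt_le_trans xy.
have E z : z `^ r = (z `^ (- r))^-1 by rewrite powRN invrK.
rewrite (E x) (E y) lef_pV2 ?posrE ?powR_gt0 //.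
by apply: (ge0_ler_powR (r := - r)); rewrite ?nnegrE ?oppr_ge0 //; apply: ltW.
Qed.

Lemma bern {R : realType} (b x d : R) : b <= 0 -> 0 < x -> 0 <= d ->
  x `^ b - (x + d) `^ b <= - b * d * x `^ b / x.
Proof.
move=> b0 x0 d0.
have t0 : 0 <= d / x by rewrite divr_ge0 // ltW.
have -> : x + d = x * (1 + d / x) by rewrite mulrDr mulr1 mulrCA divff ?gt_eqF // mulr1.
rewrite powRM; [|exact: ltW|by apply: addr_ge0].
have key : 1 + b * (d / x) <= (1 + d / x) `^ b.
  rewrite /powR gt_eqF ?ltr_wpDr //.
  apply: le_trans (expR_ge1Dx _).
  rewrite lerD2l.
  have L : ln (1 + d / x) <= d / x by apply: le_ln1Dx; lra.
  nra.
have xb0 : 0 < x `^ b by rewrite powR_gt0.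
have : x `^ b * (1 + b * (d / x)) <= x `^ b * (1 + d / x) `^ b by rewrite ler_pM2l.
rewrite mulrDr mulr1 => h.
have -> : - b * d * x `^ b / x = - (x `^ b * (b * (d / x))) by ring.
lra.
Qed.

Lemma is_derive_cont {R : realType} (f : R -> R) (x df : R) :
  is_derive x 1 f df -> {for x, continuous f}.
Proof.
move=> H; apply: differentiable_continuous; apply/derivable1_diffP.
exact: ex_derive.
Qed.

Lemma cvg_right_pow {R : realType} (q c : R) : 0 < q ->
  (fun v => (v - c) `^ q) @ c^'+ --> 0.
Proof.
move=> q0; apply/cvg_at_rightP => w [wc wcv].
have := (cvg_at_rightP (fun a => a `^ q) 0 0).1 (powR_cvg0 q0) (fun n => w n - c).
apply; split; first by move=> n; rewrite subr_gt0.
have H := cvgB wcv (cvg_cst c); rewrite subrr in H; exact: H.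
Qed.

Lemma cvg_left_pow {R : realType} (q c : R) : 0 < q ->
  (fun v => (c - v) `^ q) @ c^'- --> 0.
Proof.
move=> q0; apply/cvg_at_leftP => w [wc wcv].
have := (cvg_at_rightP (fun a => a `^ q) 0 0).1 (powR_cvg0 q0) (fun n => c - w n).
apply; split; first by move=> n; rewrite subr_gt0.
have H := cvgB (cvg_cst c) wcv; rewrite subrr in H; exact: H.
Qed.

Lemma ptwise {R : realType} (u a b tau v h be ga : R) :
  0 < h -> u <= a -> a < v -> v < b -> b < tau -> tau <= b + h -> h <= b - a ->
  be <= 0 -> ga <= 0 ->
  ((b - v) `^ be - (tau - v) `^ be) * `|v - u| `^ ga <=
  (- be * h * ((b - a) / 2) `^ be * ((b - a) / 2)^-1) * (v - a) `^ ga
  + ((b - a) / 2) `^ ga * ((b - v) `^ be - (tau - v) `^ be).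
Proof.
move=> h0 ua av vb btau tauh hD be0 ga0.
set D := b - a.
have D2 : 0 < D / 2 by rewrite /D; lra.
set F := (b - v) `^ be - (tau - v) `^ be.
have F0 : 0 <= F by rewrite /F subr_ge0; apply: powR_anti => //; lra.
have W : `|v - u| `^ ga <= (v - a) `^ ga.
  rewrite ger0_norm; last by lra.
  by apply: powR_anti => //; lra.
have W0 : 0 <= `|v - u| `^ ga by exact: powR_ge0.
have Va0 : 0 <= (v - a) `^ ga by exact: powR_ge0.
have K10 : 0 <= - be * h * (D / 2) `^ be * (D / 2)^-1.
  rewrite !mulr_ge0 ?powR_ge0 ?invr_ge0 //; lra.
have K20 : 0 <= (D / 2) `^ ga by exact: powR_ge0.
case: (leP (v - a) (D / 2)) => hv.
- have xD : D / 2 <= b - v by rewrite /D in hv *; lra.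
  have Fb : F <= - be * (tau - b) * (b - v) `^ be / (b - v).
    have := @bern R be (b - v) (tau - b) be0 _ _.
    rewrite (_ : b - v + (tau - b) = tau - v); last by ring.
    by apply; lra.
  have Fb2 : - be * (tau - b) * (b - v) `^ be / (b - v)
      <= - be * h * (D / 2) `^ be * (D / 2)^-1.
    apply: ler_pM; rewrite ?invr_ge0 ?mulr_ge0 ?powR_ge0 //; try lra.
    - apply: ler_pM; rewrite ?mulr_ge0 ?powR_ge0 //; try lra.
      + nra.
      + by apply: powR_anti.
    - rewrite lef_pV2 ?posrE //; lra.
  have : F * `|v - u| `^ ga <= (- be * h * (D / 2) `^ be * (D / 2)^-1) * (v - a) `^ ga.
    by apply: ler_pM => //; exact: le_trans Fb Fb2.
  have : 0 <= (D / 2) `^ ga * F by exact: mulr_ge0.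
  lra.
- have : `|v - u| `^ ga <= (D / 2) `^ ga.
    apply: le_trans W _; apply: powR_anti => //; exact: ltW.
  move=> WK.
  have : F * `|v - u| `^ ga <= (D / 2) `^ ga * F.
    by rewrite mulrC; apply: ler_wpM2r.
  have : 0 <= (- be * h * (D / 2) `^ be * (D / 2)^-1) * (v - a) `^ ga by exact: mulr_ge0.
  lra.
Qed.

Lemma dshiftR {R : realType} (c x : R) : is_derive x 1 (fun v : R => v - c) 1.
Proof.
have := @is_deriveB R R R id (fun=> c) x 1 1 0 (is_derive_id _ _) (is_derive_cst _ _ _).
rewrite subr0; exact.
Qed.
Lemma dshiftL {R : realType} (c x : R) : is_derive x 1 (fun v : R => c - v) (-1).
Proof.
have := @is_deriveB R R R (fun=> c) id x 1 0 1 (is_derive_cst _ _ _) (is_derive_id _ _).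
rewrite sub0r; exact.
Qed.
Lemma t1 {R : realType} (p c x : R) : c < x ->
  is_derive x 1 (fun v => (v - c) `^ p) (p * (x - c) `^ (p - 1)).
Proof.
move=> cx.
have h2 : is_derive (x - c) 1 (@powR R ^~ p) (p * (x - c) `^ (p - 1)).
  by apply: is_derive1_powR; rewrite subr_gt0.
have := @is_derive1_comp R (@powR R ^~ p) (fun v => v - c) x _ _ h2 (@dshiftR R c x).
rewrite mulr1; exact.
Qed.
Lemma t2 {R : realType} (p c x : R) : x < c ->
  is_derive x 1 (fun v => (c - v) `^ p) (- (p * (c - x) `^ (p - 1))).
Proof.
move=> cx.
have h2 : is_derive (c - x) 1 (@powR R ^~ p) (p * (c - x) `^ (p - 1)).
  by apply: is_derive1_powR; rewrite subr_gt0.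
have := @is_derive1_comp R (@powR R ^~ p) (fun v => c - v) x _ _ h2 (@dshiftL R c x).
rewrite mulrN1; exact.
Qed.

Lemma IFTC {R : realType} (f Phi : R -> R) (c d : R) :
  c < d ->
  {in `]c, d[, continuous f} ->
  (forall x, c < x < d -> 0 <= f x) ->
  derivable_oo_LRcontinuous Phi c d ->
  {in `]c, d[, Phi^`()%classic =1 f} ->
  (\int[@lebesgue_measure R]_(x in `]c, d[) (f x)%:E = (Phi d - Phi c)%:E)%E.
Proof.
move=> cd cf f0 [dPhi Phic Phid] dE.
pose e n : R := harmonic n * ((d - c) / 3).
have dc0 : 0 < d - c by rewrite subr_gt0.
have e0 n : 0 < e n by rewrite /e mulr_gt0 ?divr_gt0 ?harmonic_gt0.
have h1 n : harmonic n <= 1 :> R.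
  by rewrite /harmonic invf_le1 ?ler1n ?ltr0n.
have e_le n : e n <= (d - c) / 3.
  rewrite /e; have := h1 n; have := harmonic_gt0 (R:=R) n; nra.
have ce n : c < c + e n by have := e0 n; lra.
have de n : d - e n < d by have := e0 n; lra.
have cde n : c + e n < d - e n.
  by have := e_le n; lra.
have e_nd m n : (m <= n)%N -> e n <= e m.
  move=> mn; rewrite /e ler_pM2r ?divr_gt0 ?ltr0n //.
  by rewrite /harmonic lef_pV2 ?posrE ?ltr0n // ler_nat.
have ecvg : e n @[n --> \oo] --> 0.
  have := @cvgMl _ _ _ _ harmonic 0 ((d - c) / 3) (@cvg_harmonic R).
  rewrite mul0r. exact.
have mf : measurable_fun `]c, d[ f.
  apply: open_continuous_measurable_fun; first exact: interval_open.
  by move=> x /set_mem xin; apply: cf; rewrite inE.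
pose g n := (EFin \o f) \_ `[c + e n, d - e n].
have sub n : `[c + e n, d - e n] `<=` `]c, d[.
  move=> x /=; rewrite !in_itv /= => /andP[h1x h2x].
  by rewrite (lt_le_trans (ce n)) // (le_lt_trans h2x (de n)).
have FTC n : (\int[lebesgue_measure]_(x in `[(c + e n)%R, (d - e n)%R]) (f x)%:E
    = (Phi (d - e n) - Phi (c + e n))%:E)%E.
  rewrite (@continuous_FTC2 _ f Phi) ?EFinB //.
  - apply: continuous_in_subspaceT => x /set_mem xin.
    by apply: cf; exact: (sub n x xin).
  - split.
    + move=> x; rewrite in_itv /= => /andP[h1x h2x]; apply: dPhi.
      by rewrite in_itv /= (lt_trans (ce n)) // (lt_trans h2x (de n)).
    + apply: cvg_at_right_filter; apply: differentiable_continuous.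
      by apply/derivable1_diffP/dPhi; rewrite in_itv /= ce /= (lt_trans (cde n)).
    + apply: cvg_at_left_filter; apply: differentiable_continuous.
      by apply/derivable1_diffP/dPhi; rewrite in_itv /= de (lt_trans _ (cde n)).
  - move=> x; rewrite in_itv /= => /andP[h1x h2x]; apply: dE.
    by rewrite in_itv /= (lt_trans (ce n)) // (lt_trans h2x (de n)).
have mg n : measurable_fun `]c, d[ (g n).
  have mEf : measurable_fun (`]c, d[ : set R) (EFin \o f : R -> \bar R).
    exact: (measurable_EFinP _ _).2 mf.
  exact: ((measurable_restrict (EFin \o f) (measurable_itv `[c + e n, d - e n]) (measurable_itv `]c, d[)).1
   (measurable_funS (measurable_itv `]c, d[) (@subIsetl _ `]c, d[%classic `[c + e n, d - e n]%classic) mEf)).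
have g0 k x : `]c, d[%classic x -> (0 <= g k x)%E.
  move=> _; apply: erestrict_ge0 => y /sub /=; rewrite in_itv /= => yin.
  by rewrite lee_fin f0.
have nd x : `]c, d[%classic x -> {homo g^~ x : m0 n0 / (m0 <= n0)%N >-> (m0 <= n0)%E}.
  move=> _ i j ij; apply: restrict_lee.
    by move=> y /sub /=; rewrite in_itv /= => yin; rewrite lee_fin f0.
  move=> y /=; rewrite !in_itv /= => /andP[h1y h2y].
  move: (e_nd _ _ ij) => enm; apply/andP; split; lra.
have lim_g x : `]c, d[%classic x -> limn (g^~ x) = (f x)%:E.
  rewrite /= in_itv /= => /andP[cx xd].
  apply: lim_near_cst => //.
  have mpos : 0 < Num.min (x - c) (d - x) by rewrite lt_min !subr_gt0 cx xd.
  move/cvgrPdist_lt : ecvg => /(_ _ mpos) en.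
  near=> k.
  have ek : `|0 - e k| < Num.min (x - c) (d - x) by near: k; exact: en.
  move: ek; rewrite sub0r normrN gtr0_norm // lt_min => /andP[ek1 ek2].
  have xin : `[(c + e k)%R, (d - e k)%R]%classic x.
    by rewrite /= in_itv /=; apply/andP; split; lra.
  rewrite /g patchE ifT // inE /= in_itv /=; apply/andP; split; lra.
transitivity (\int[lebesgue_measure]_(x in `]c, d[) limn (g^~ x))%E.
  by apply: eq_integral => x /set_mem xin; rewrite lim_g.
rewrite monotone_convergence //.
transitivity (limn (fun n => (Phi (d - e n) - Phi (c + e n))%:E)).
  congr (limn _); apply/funext => n.
  by rewrite /g -integral_mkcondr setIidr ?FTC //; exact: sub.
apply: cvg_lim => //.
apply: cvg_EFin; first exact: nearW.
have ed : (d - e n) @[n --> \oo] --> d.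
  have H := cvgB (cvg_cst d) ecvg; rewrite subr0 in H; exact: H.
have ec : (c + e n) @[n --> \oo] --> c.
  have H := cvgD (cvg_cst c) ecvg; rewrite addr0 in H; exact: H.
apply: cvgB.
  exact: ((cvg_at_leftP Phi d (Phi d)).1 Phid (fun n => d - e n) (conj de ed)).
exact: ((cvg_at_rightP Phi c (Phi c)).1 Phic (fun n => c + e n) (conj ce ec)).
Unshelve. all: by end_near. Qed.

Lemma dscale {R : realType} (f : R -> R) (k x df : R) :
  is_derive x 1 f df -> is_derive x 1 (fun v => k * f v) (k * df).
Proof. move=> H; have := @is_deriveZ R R R f k x 1 df H; exact. Qed.

Lemma int1 {R : realType} (a b ga : R) : a < b -> -1 < ga ->
  (\int[@lebesgue_measure R]_(v in `]a, b[) ((v - a) `^ ga)%:E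
    = ((ga + 1)^-1 * (b - a) `^ (ga + 1))%:E)%E.
Proof.
move=> ab ga1.
have g10 : 0 < ga + 1 by lra.
pose Phi v := (ga + 1)^-1 * (v - a) `^ (ga + 1).
have dPhi x : a < x -> is_derive x 1 Phi ((x - a) `^ ga).
  move=> ax; have := @dscale R _ (ga + 1)^-1 x _ (t1 (ga + 1) a x ax).
  rewrite mulrA mulVf ?gt_eqF // mul1r addrK; exact.
have -> : (ga + 1)^-1 * (b - a) `^ (ga + 1) = Phi b - Phi a.
  by rewrite /Phi subrr powR0 ?gt_eqF // mulr0 subr0.
apply: IFTC => //.
- move=> x; rewrite in_itv /= => /andP[ax _].
  by have := t1 ga a x ax; exact: is_derive_cont.
- by move=> x /andP[ax _]; exact: powR_ge0.
- split.
  + move=> x; rewrite in_itv /= => /andP[ax _].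
    have H := dPhi x ax; exact: ex_derive.
  + rewrite /Phi subrr powR0 ?gt_eqF // mulr0.
    have H := cvgM (cvg_cst (ga + 1)^-1) (cvg_right_pow (ga + 1) a g10).
    rewrite mulr0 in H; exact: H.
  + apply: cvg_at_left_filter; exact: is_derive_cont (dPhi b ab).
- move=> x; rewrite in_itv /= => /andP[ax _].
  by have H := dPhi x ax; rewrite derive1E derive_val.
Qed.

Lemma int2 {R : realType} (a b tau al : R) : a < b -> b < tau -> 0 < al -> al <= 1 ->
  (\int[@lebesgue_measure R]_(v in `]a, b[) ((b - v) `^ (al - 1) - (tau - v) `^ (al - 1))%:E
    = (al^-1 * ((tau - b) `^ al - ((tau - a) `^ al - (b - a) `^ al)))%:E)%E.
Proof.
move=> ab btau al0 al1.
pose Phi v := al^-1 * ((tau - v) `^ al - (b - v) `^ al).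
have dPhi x : x < b ->
    is_derive x 1 Phi ((b - x) `^ (al - 1) - (tau - x) `^ (al - 1)).
  move=> xb.
  have xt : x < tau by lra.
  have H1 := t2 al tau x xt.
  have H2 := t2 al b x xb.
  have H := @dscale R _ al^-1 x _ (@is_deriveB R R R _ _ x 1 _ _ H1 H2).
  have E : al^-1 * (- (al * (tau - x) `^ (al - 1)) - - (al * (b - x) `^ (al - 1)))
      = (b - x) `^ (al - 1) - (tau - x) `^ (al - 1).
    by field; rewrite gt_eqF.
  rewrite E in H; exact: H.
have -> : al^-1 * ((tau - b) `^ al - ((tau - a) `^ al - (b - a) `^ al)) = Phi b - Phi a.
  by rewrite /Phi subrr powR0 ?gt_eqF // subr0 -mulrBr.
apply: IFTC => //.
- move=> x; rewrite in_itv /= => /andP[_ xb].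
  have xt : x < tau by lra.
  have := @is_deriveB R R R _ _ x 1 _ _ (t2 (al - 1) b x xb) (t2 (al - 1) tau x xt).
  exact: is_derive_cont.
- move=> x /andP[_ xb]; rewrite subr_ge0; apply: powR_anti; lra.
- split.
  + move=> x; rewrite in_itv /= => /andP[_ xb].
    have H := dPhi x xb; exact: ex_derive.
  + apply: cvg_at_right_filter; exact: is_derive_cont (dPhi a ab).
  + rewrite /Phi subrr powR0 ?gt_eqF //.
    have Tc : (fun v => (tau - v) `^ al) @ b^'- --> (tau - b) `^ al.
      by apply: cvg_at_left_filter; exact: is_derive_cont (t2 al tau b btau).
    have H := cvgM (cvg_cst al^-1) (cvgB Tc (cvg_left_pow al b al0)).
    exact: H.
- move=> x; rewrite in_itv /= => /andP[_ xb].
  by have H := dPhi x xb; rewrite derive1E derive_val.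
Qed.

Lemma meas_g {R : realType} (b tau u be ga : R) :
  measurable_fun setT (fun v : R => ((b - v) `^ be - (tau - v) `^ be) * `|v - u| `^ ga).
Proof.
have mB (c : R) : measurable_fun setT (fun v : R => (c - v) `^ be).
  exact: (measurableT_comp (measurable_powR be) (measurable_funB (measurable_cst c) (@measurable_id _ _ setT))).
apply: measurable_funM; first exact: measurable_funB.
apply: (measurableT_comp (measurable_powR ga)).
apply: (measurableT_comp (@normr_measurable _ _)).
exact: (measurable_funB (@measurable_id _ _ setT) (measurable_cst u)).
Qed.

Lemma meas_F {R : realType} (b tau be : R) :
  measurable_fun setT (fun v : R => ((b - v) `^ be - (tau - v) `^ be)).
Proof.
have mB (c : R) : measurable_fun setT (fun v : R => (c - v) `^ be).
  exact: (measurableT_comp (measurable_powR be) (measurable_funB (measurable_cst c) (@measurable_id _ _ setT))).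
exact: measurable_funB.
Qed.

Lemma meas_A {R : realType} (a ga : R) :
  measurable_fun setT (fun v : R => (v - a) `^ ga).
Proof.
exact: (measurableT_comp (measurable_powR ga) (measurable_funB (@measurable_id _ _ setT) (measurable_cst a))).
Qed.

End Aux.
Import Aux.

Theorem lemma3p4 (R : realType) (H alpha T : R) :
  1 / 2 < H < 1 -> 1 - H < alpha < 1 -> 0 < T ->
  exists C : R, forall (N k l : nat) (u s tau : R),
    (2 <= N)%N -> (1 <= k)%N -> (k < l)%N -> (l <= N)%N ->
    0 < u -> u <= grid T N k.-1 -> grid T N k.-1 < s -> s <= grid T N k ->
    grid T N l.-1 < tau -> tau <= grid T N l ->
    (\int[@lebesgue_measure R]_(v in `[grid T N k.-1, grid T N l.-1])
        (((grid T N l.-1 - v) `^ (alpha - 1) - (tau - v) `^ (alpha - 1))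
          * `|v - u| `^ (2 * H - 2))%:E
     <= (C * step T N `^ alpha * (tau - s) `^ (2 * H - 2))%:E)%E.
Proof.
move=> /andP[H1 H2] /andP[a1 a2] T0.
set be := alpha - 1.
set ga := 2 * H - 2.
have al0 : 0 < alpha by lra.
have be0 : be <= 0 by rewrite /be; lra.
have ga0 : ga <= 0 by rewrite /ga; lra.
have ga1 : 0 < ga + 1 by rewrite /ga; lra.
set k1 := - be * (ga + 1)^-1 * 2.
set k2 := (2^-1 : R) `^ ga * alpha^-1.
exists ((k1 * (2^-1 : R) `^ be + k2) / 2 `^ ga).
move=> N k l u s tau N2 k1' kl lN u0 ua as_ sk btau taul.
set h := step T N.
set a := grid T N k.-1.
set b := grid T N l.-1.
have h0 : 0 < h by rewrite /h /step divr_gt0 // ltr0n (ltnW N2).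
have gE n : grid T N n = n%:R * h by [].
have l1 : (0 < l)%N by exact: leq_ltn_trans (leq0n k) kl.
have kk : (k.-1.+1 <= l.-1)%N.
  by rewrite prednK // -ltnS prednK.
have Dh : h <= b - a.
  rewrite /b /a !gE.
  have : (k.-1.+1)%:R <= (l.-1)%:R :> R by rewrite ler_nat.
  rewrite -natr1 => H'.
  have := ler_wpM2l (ltW h0) H'; rewrite mulrDr mulr1 (mulrC h) (mulrC h); lra.
have skh : s <= a + h.
  have := sk; rewrite /a !gE -{1}(prednK k1') -natr1; lra.
have tauh : tau <= b + h.
  have := taul; rewrite /b !gE -{1}(prednK l1) -natr1; lra.
have ua' : u <= a by [].
have as' : a < s by [].
have btau' : b < tau by [].
have ab : a < b by lra.
clear ua as_ sk btau taul gE.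
clearbody h a b.
set D := b - a.
set K1 := - be * h * (D / 2) `^ be * (D / 2)^-1.
set K2 := (D / 2) `^ ga.
set X := (tau - b) `^ alpha - ((tau - a) `^ alpha - (b - a) `^ alpha).
have mg : measurable_fun `]a, b[ (fun v => (((b - v) `^ be - (tau - v) `^ be) * `|v - u| `^ ga)%:E).
  apply/measurable_EFinP; apply: measurable_funTS; exact: meas_g.
have mA : measurable_fun `]a, b[ (fun v => ((v - a) `^ ga)%:E).
  apply/measurable_EFinP; apply: measurable_funTS; exact: meas_A.
have mF : measurable_fun `]a, b[ (fun v => ((b - v) `^ be - (tau - v) `^ be)%:E).
  apply/measurable_EFinP; apply: measurable_funTS; exact: meas_F.
have F0 v : a < v < b -> 0 <= (b - v) `^ be - (tau - v) `^ be.
  move=> /andP[_ vb]; rewrite subr_ge0; apply: powR_anti => //; lra.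
rewrite integral_itv_bndoo //.
apply: (@le_trans _ _ (\int[lebesgue_measure]_(v in `]a, b[)
   ((K1%:E * ((v - a) `^ ga)%:E) + (K2%:E * ((b - v) `^ be - (tau - v) `^ be)%:E)))%E).
  apply: ge0_le_integral => //.
  - move=> v /=; rewrite in_itv /= => vab.
    by rewrite lee_fin mulr_ge0 ?F0 ?powR_ge0.
  - apply: emeasurable_funD; apply: emeasurable_funM => //; exact: measurable_cst.
  - move=> v /=; rewrite in_itv /= => /andP[av vb].
    rewrite -!EFinM -EFinD lee_fin.
    by apply: ptwise => //; lra.
have D2 : 0 < D / 2 by rewrite /D; lra.
have K10 : 0 <= K1 by rewrite /K1 !mulr_ge0 ?powR_ge0 ?invr_ge0 //; lra.
have K20 : 0 <= K2 by exact: powR_ge0.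
have A0 v : `]a, b[%classic v -> (0 <= ((v - a) `^ ga)%:E)%E.
  by move=> _; rewrite lee_fin powR_ge0.
have F0' v : `]a, b[%classic v -> (0 <= ((b - v) `^ be - (tau - v) `^ be)%:E)%E.
  by move=> /=; rewrite in_itv /= lee_fin => /F0.
rewrite ge0_integralD //; first last.
- by apply: emeasurable_funM => //; exact: measurable_cst.
- by move=> v /F0' H'; rewrite mule_ge0.
- by apply: emeasurable_funM => //; exact: measurable_cst.
- by move=> v /A0 H'; rewrite mule_ge0.
rewrite ge0_integralZl_EFin // ge0_integralZl_EFin //.
rewrite int1; last 2 first; [exact: ab | lra |].
rewrite (int2 a b tau alpha ab btau' al0 (ltW a2)).
rewrite -!EFinM -EFinD lee_fin.
rewrite -/D.
have D0 : 0 < D by rewrite /D; lra.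
have hD : h / 2 <= D / 2 by rewrite /D; lra.
have i20 : (0 : R) <= 2^-1 by rewrite invr_ge0.
have E1 : K1 * ((ga + 1)^-1 * D `^ (ga + 1)) = k1 * (h * (D / 2) `^ be) * D `^ ga.
  have DD := mulr_powRB1 (ltW D0) ga1; rewrite addrK in DD.
  rewrite -DD /K1 /k1; field.
  by apply/andP; split; [rewrite gt_eqF | rewrite gt_eqF].
have P0 : 0 <= h * (D / 2) `^ be by rewrite mulr_ge0 ?powR_ge0 // ltW.
have PP : h * (D / 2) `^ be <= h `^ alpha * (2^-1) `^ be.
  have e1 : (D / 2) `^ be <= (h / 2) `^ be by apply: powR_anti => //; lra.
  have e2 : (h / 2) `^ be = h `^ be * (2^-1) `^ be by rewrite powRM // ltW.
  have e3 : h * h `^ be = h `^ alpha by rewrite /be mulr_powRB1 // ltW.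
  by rewrite -e3 -mulrA -e2; apply: ler_wpM2l => //; exact: ltW.
have Q0 : 0 <= D `^ ga by exact: powR_ge0.
have t2pos : 0 < (2 : R) `^ ga by rewrite powR_gt0.
have QQ : D `^ ga <= (tau - s) `^ ga / 2 `^ ga.
  rewrite ler_pdivlMr // mulrC -powRM //; last exact: ltW.
  by apply: powR_anti => //; rewrite /D; lra.
have f1 : (tau - b) `^ alpha <= h `^ alpha.
  by apply: ge0_ler_powR; rewrite ?nnegrE; lra.
have f2 : D `^ alpha <= (tau - a) `^ alpha.
  by apply: ge0_ler_powR; rewrite ?nnegrE /D; lra.
have XX : alpha^-1 * X <= alpha^-1 * h `^ alpha.
  by apply: ler_wpM2l; [rewrite invr_ge0 ltW | rewrite /X -/D; lra].
have K2E : K2 = D `^ ga * (2^-1) `^ ga by rewrite /K2 powRM // ltW.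
have k10 : 0 <= k1 by rewrite /k1 !mulr_ge0 ?invr_ge0 //; lra.
have hal0 : 0 <= h `^ alpha by exact: powR_ge0.
have c0 : 0 <= (2^-1 : R) `^ ga by exact: powR_ge0.
rewrite E1 K2E -/X.
have T1 : k1 * (h * (D / 2) `^ be) * D `^ ga <=
    k1 * (h `^ alpha * (2^-1) `^ be) * ((tau - s) `^ ga / 2 `^ ga).
  apply: ler_pM => //; first by rewrite mulr_ge0.
  by apply: ler_wpM2l.
have T2 : D `^ ga * (2^-1) `^ ga * (alpha^-1 * X) <=
    ((tau - s) `^ ga / 2 `^ ga) * (2^-1) `^ ga * (alpha^-1 * h `^ alpha).
  apply: (@le_trans _ _ (D `^ ga * (2^-1) `^ ga * (alpha^-1 * h `^ alpha))).
    by apply: ler_wpM2l => //; rewrite mulr_ge0.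
  apply: ler_wpM2r; first by rewrite mulr_ge0 // invr_ge0 ltW.
  by apply: ler_wpM2r.
have RHS : (k1 * 2^-1 `^ be + k2) / 2 `^ ga * h `^ alpha * (tau - s) `^ ga
    = k1 * (h `^ alpha * (2^-1) `^ be) * ((tau - s) `^ ga / 2 `^ ga)
      + ((tau - s) `^ ga / 2 `^ ga) * (2^-1) `^ ga * (alpha^-1 * h `^ alpha).
  rewrite /k2; field.
  by apply/andP; split; rewrite gt_eqF.
rewrite RHS; lra.
Qed.
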